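(* Let $\mathcal{M}_1=(\Sigma,\Gamma,\mathcal{H}_1,U^{(1)},M^{(1)})$ and $\mathcal{M}_2=(\Sigma,\Gamma,\mathcal{H}_2,U^{(2)},M^{(2)})$ be QMMs with initial density operators $\rho_1,\rho_2$, let $k$ be a positive integer, $n_1=\dim\mathcal{H}_1$, $n_2=\dim\mathcal{H}_2$ and $n=n_1^2+n_2^2$. Then $(\mathcal{M}_1,\rho_1)\sim_k(\mathcal{M}_2,\rho_2)$ if and only if there exist complex $n\times n$ matrices $F^{(0)},\dots,F^{(k)}$, $A^{(0)}_\sigma,\dots,A^{(k)}_\sigma$ for each $\sigma\in\Sigma$, and $A^{(0)}_\gamma,\dots,A^{(k-1)}_\gamma$ for each $\gamma\in\Gamma$, such that: (1) the first column of $F^{(0)}$ is $\begin{bmatrix}\vec\rho_1\\ \vec\rho_2\end{bmatrix}$; (2) $\eta^\dagger F^{(l)}=0$ for $0\le l\le k$, where $\eta=\begin{bmatrix}\eta_{n_1}\\ -\eta_{n_2}\end{bmatrix}$; (3) for every $\sigma\in\Sigma$ and $0\le l\le k$: $\begin{bmatrix}\hat U^{(1)}_\sigma&0\\0&\hat U^{(2)}_\sigma\end{bmatrix}F^{(l)}=F^{(l)}A^{(l)}_\sigma$; (4) for every $\gamma\in\Gamma$ and $0\le l<k$: $\begin{bmatrix}\hat M^{(1)}_\gamma&0\\0&\hat M^{(2)}_\gamma\end{bmatrix}F^{(l)}=F^{(l+1)}A^{(l)}_\gamma$.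
   Context: A quantum Mealy machine (QMM) is a tuple $\mathcal{M}=(\Sigma,\Gamma,\mathcal{H},U,M)$ where $\Sigma,\Gamma$ are finite alphabets, $\mathcal{H}$ a finite-dimensional complex Hilbert space, $U=\{U_\sigma\}_{\sigma\in\Sigma}$ unitary operators on $\mathcal{H}$, $M=\{M_\gamma\}_{\gamma\in\Gamma}$ linear operators with $\sum_\gamma M_\gamma^\dagger M_\gamma=I$. For a word $a$, $|a|$ is its length, $a[l:r]=a[l]\cdots a[r]$ (empty if $l>r$), $U_a=U_{a[|a|]}\cdots U_{a[1]}$, $U_\epsilon=I$. A scheduler for $a\in\Sigma^*$ is a finite non-decreasing integer sequence $\mathcal{S}=(s_1\le\dots\le s_{|\mathcal{S}|})$ in $\{0,\dots,|a|\}$ (possibly empty). With $s_0=0$, $s_{|\mathcal{S}|+1}=|a|$, $a_i=a[s_{i-1}+1:s_i]$. For $b\in\Gamma^{|\mathcal{S}|}$, $V_{b|a,\mathcal{S}}=U_{a_{|\mathcal{S}|+1}}M_{b_{|\mathcal{S}|}}U_{a_{|\mathcal{S}|}}\cdots M_{b_1}U_{a_1}$ and $\Pr^{\mathcal{M}}_\rho(b|a,\mathcal{S})=\operatorname{tr}(V_{b|a,\mathcal{S}}\rho V_{b|a,\mathcal{S}}^\dagger)$. $(\mathcal{M}_1,\rho_1)\sim_k(\mathcal{M}_2,\rho_2)$ means $\Pr^{\mathcal{M}_1}_{\rho_1}(b|a,\mathcal{S})=\Pr^{\mathcal{M}_2}_{\rho_2}(b|a,\mathcal{S})$ for all $a\in\Sigma^*$,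 schedulers $\mathcal{S}$ for $a$ with $|\mathcal{S}|\le k$, and $b\in\Gamma^{|\mathcal{S}|}$. For a $d\times d$ matrix $\rho$, its vectorization $\vec\rho\in\mathbb{C}^{d^2}$ has entries $\vec\rho_{(i-1)d+j}=\rho_{ij}$; for a $d\times d$ matrix $A$, $\hat A$ is the $d^2\times d^2$ matrix with $\hat A_{(i-1)d+j,(x-1)d+y}=A_{ix}\overline{A_{jy}}$ (so $\overrightarrow{A\rho A^\dagger}=\hat A\vec\rho$); $\eta_d\in\mathbb{C}^{d^2}$ is the vectorization of the trace, $(\eta_d)_{(i-1)d+j}=\delta_{ij}$ (so $\operatorname{tr}\rho=\eta_d^\dagger\vec\rho$). *)

(* Defs.v *)
(* The complex field is abstracted as an arbitrary
   numClosedFieldType C (algebraically closed field with conjugation and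
   order/norm, e.g. algC or the complex numbers). *)
From HB Require Import structures.
From mathcomp Require Import all_boot all_order all_algebra.
Set Implicit Arguments. Unset Strict Implicit. Unset Printing Implicit Defensive.
Import Order.TTheory GRing.Theory Num.Theory.
Local Open Scope ring_scope.

Section QMM.
Variable C : numClosedFieldType.

Definition adjmx m n (A : 'M[C]_(m, n)) : 'M[C]_(n, m) := (map_mx Num.conj A)^T.

Definition density d (rho : 'M[C]_d) : Prop :=
  (forall v : 'cV[C]_d, 0 <= (adjmx v *m rho *m v) 0 0) /\ \tr rho = 1.

Definition unitary d (U : 'M[C]_d) : Prop :=
  adjmx U *m U = 1%:M /\ U *m adjmx U = 1%:M.

Definition measurement (Gamma : finType) d (M : Gamma -> 'M[C]_d) : Prop :=
  \sum_(g : Gamma) adjmx (M g) *m M g = 1%:M.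

(* U_a = U_{a[|a|]} ... U_{a[1]} *)
Definition Uword (Sigma : finType) d (U : Sigma -> 'M[C]_d) (a : seq Sigma) : 'M[C]_d :=
  foldl (fun acc s => U s *m acc) 1%:M a.

(* a[l+1 : r] (1-indexed), i.e. the letters at 0-indexed positions l .. r-1 *)
Definition segment (T : Type) (a : seq T) (l r : nat) : seq T :=
  take (r - l) (drop l a).

Fixpoint Vrec (Sigma Gamma : finType) d (U : Sigma -> 'M[C]_d) (M : Gamma -> 'M[C]_d)
  (a : seq Sigma) (p : nat) (sb : seq (nat * Gamma)) : 'M[C]_d :=
  match sb with
  | [::] => Uword U (segment a p (size a))
  | (s, g) :: rest => Vrec U M a s rest *m M g *m Uword U (segment a p s)
  end.

Definition Vmx (Sigma Gamma : finType) d (U : Sigma -> 'M[C]_d) (M : Gamma -> 'M[C]_d)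
  (a : seq Sigma) (S : seq nat) (b : seq Gamma) : 'M[C]_d :=
  Vrec U M a 0 (zip S b).

Definition Pr (Sigma Gamma : finType) d (U : Sigma -> 'M[C]_d) (M : Gamma -> 'M[C]_d)
  (rho : 'M[C]_d) (a : seq Sigma) (S : seq nat) (b : seq Gamma) : C :=
  let V := Vmx U M a S b in \tr (V *m rho *m adjmx V).

Definition scheduler (T : Type) (a : seq T) (S : seq nat) : bool :=
  sorted leq S && all (fun s => s <= size a)%N S.

Definition kequiv (Sigma Gamma : finType) d1 d2
  (U1 : Sigma -> 'M[C]_d1) (M1 : Gamma -> 'M[C]_d1) (rho1 : 'M[C]_d1)
  (U2 : Sigma -> 'M[C]_d2) (M2 : Gamma -> 'M[C]_d2) (rho2 : 'M[C]_d2) (k : nat) : Prop :=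
  forall (a : seq Sigma) (S : seq nat), scheduler a S -> (size S <= k)%N ->
  forall b : (size S).-tuple Gamma,
    Pr U1 M1 rho1 a S b = Pr U2 M2 rho2 a S b.

(* index splitting for vectorization: 0-indexed k = i*d + j *)
Lemma vec_pos d (k : 'I_(d * d)) : (0 < d)%N.
Proof. by case: d k => [[]|]. Qed.
Lemma vec_div_lt d (k : 'I_(d * d)) : (k %/ d < d)%N.
Proof. by rewrite ltn_divLR ?vec_pos. Qed.
Lemma vec_mod_lt d (k : 'I_(d * d)) : (k %% d < d)%N.
Proof. by rewrite ltn_pmod ?vec_pos. Qed.
Definition vrow d (k : 'I_(d * d)) : 'I_d := Ordinal (vec_div_lt k).
Definition vcol d (k : 'I_(d * d)) : 'I_d := Ordinal (vec_mod_lt k).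

Definition vecmx d (rho : 'M[C]_d) : 'cV[C]_(d * d) :=
  \col_(k < d * d) rho (vrow k) (vcol k).

Definition hatmx d (A : 'M[C]_d) : 'M[C]_(d * d) :=
  \matrix_(p < d * d, q < d * d) (A (vrow p) (vrow q) * Num.conj (A (vcol p) (vcol q))).

(* eta_d = vectorization of the identity (trace functional) *)
Definition etavec d : 'cV[C]_(d * d) :=
  \col_(k < d * d) (if vrow k == vcol k then 1 else 0).

End QMM.

(* Main.v *)
Require Import Defs.
From HB Require Import structures.
From mathcomp Require Import all_boot all_order all_algebra.
From mathcomp Require Import ring zify.
From Stdlib Require Import Classical ClassicalEpsilon.
Set Implicit Arguments. Unset Strict Implicit. Unset Printing Implicit Defensive.
Import Order.TTheory GRing.Theory Num.Theory.
Local Open Scope ring_scope.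


Section Lin.
Variable C : numClosedFieldType.

Definition conjm d (A X : 'M[C]_d) := A *m X *m adjmx A.

Lemma adjmxE m n (A : 'M[C]_(m, n)) i j : adjmx A i j = (A j i)^*.
Proof. by rewrite /adjmx !mxE. Qed.

Lemma adjmxM m n p (A : 'M[C]_(m, n)) (B : 'M[C]_(n, p)) :
  adjmx (A *m B) = adjmx B *m adjmx A.
Proof. by rewrite /adjmx map_mxM trmx_mul. Qed.

Lemma adjmx1 d : adjmx (1%:M : 'M[C]_d) = 1%:M.
Proof. by rewrite /adjmx map_mx1 trmx1. Qed.

Lemma conjmM d (A B X : 'M[C]_d) : conjm (A *m B) X = conjm A (conjm B X).
Proof. by rewrite /conjm adjmxM !mulmxA. Qed.

Lemma conjm1 d (X : 'M[C]_d) : conjm 1%:M X = X.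
Proof. by rewrite /conjm adjmx1 mul1mx mulmx1. Qed.

Definition mkidx d (i j : 'I_d) : 'I_(d * d).
Proof.
apply: (@Ordinal _ (i * d + j)).
have h1 := ltn_ord i; have h2 := ltn_ord j.
apply: (@leq_trans (i * d + d)); first by rewrite ltn_add2l.
by rewrite -mulSnr leq_mul2r h1 orbT.
Defined.

Lemma vrow_mk d (i j : 'I_d) : vrow (mkidx i j) = i.
Proof.
apply: val_inj => /=; have h := ltn_ord j.
by rewrite divnMDl ?(leq_ltn_trans _ h) // divn_small // addn0.
Qed.

Lemma vcol_mk d (i j : 'I_d) : vcol (mkidx i j) = j.
Proof. by apply: val_inj => /=; rewrite modnMDl modn_small. Qed.

Lemma mk_vrow d (k : 'I_(d * d)) : mkidx (vrow k) (vcol k) = k.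
Proof. by apply: val_inj => /=; rewrite -divn_eq. Qed.

Lemma sum_vec d (f : 'I_d -> 'I_d -> C) :
  \sum_(k < d * d) f (vrow k) (vcol k) = \sum_(i < d) \sum_(j < d) f i j.
Proof.
rewrite pair_big /=.
rewrite (reindex (fun p : 'I_d * 'I_d => mkidx p.1 p.2)) /=.
  by apply: eq_bigr => -[i j] _; rewrite vrow_mk vcol_mk.
exists (fun k => (vrow k, vcol k)) => [[i j] _|k _] /=.
  by rewrite vrow_mk vcol_mk.
by rewrite mk_vrow.
Qed.

Lemma sum_vec2 d (f : 'I_(d * d) -> C) :
  \sum_(k < d * d) f k = \sum_(i < d) \sum_(j < d) f (mkidx i j).
Proof.
rewrite -(sum_vec (fun i j => f (mkidx i j))).
by apply: eq_bigr => k _; rewrite mk_vrow.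
Qed.

Lemma vec_conjm d (A X : 'M[C]_d) :
  vecmx (conjm A X) = hatmx A *m vecmx X.
Proof.
apply/matrixP => p z; rewrite !mxE.
rewrite sum_vec2.
under [RHS]eq_bigr => x _ do under eq_bigr => y _ do rewrite !mxE vrow_mk vcol_mk.
transitivity (\sum_y \sum_x A (vrow p) x * X x y * (A (vcol p) y)^*).
  apply: eq_bigr => y _; rewrite adjmxE mxE big_distrl /=.
  by [].
rewrite exchange_big /=; apply: eq_bigr => x _; apply: eq_bigr => y _.
ring.
Qed.

Lemma tr_vec d (X : 'M[C]_d) : (adjmx (etavec C d) *m vecmx X) 0 0 = \tr X.
Proof.
rewrite mxE sum_vec2 /mxtrace; apply: eq_bigr => i _.
rewrite (bigD1 i) //= big1 ?addr0.
  by rewrite adjmxE !mxE vrow_mk vcol_mk eqxx rmorph1 mul1r.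
move=> j ne; rewrite adjmxE !mxE vrow_mk vcol_mk eq_sym (negbTE ne).
by rewrite rmorph0 mul0r.
Qed.

Lemma adjmx_col m1 m2 n (a : 'M[C]_(m1, n)) (b : 'M[C]_(m2, n)) :
  adjmx (col_mx a b) = row_mx (adjmx a) (adjmx b).
Proof. by rewrite /adjmx map_col_mx tr_col_mx. Qed.

Lemma adjmxN m n (a : 'M[C]_(m, n)) : adjmx (- a) = - adjmx a.
Proof. by apply/matrixP => i j; rewrite !adjmxE !mxE rmorphN. Qed.

Lemma eta_cv n1 n2 (X : 'M[C]_n1) (Y : 'M[C]_n2) :
  (adjmx (col_mx (etavec C n1) (- etavec C n2)) *m col_mx (vecmx X) (vecmx Y)) 0 0
  = \tr X - \tr Y.
Proof.
rewrite adjmx_col adjmxN mul_row_col mulNmx [LHS]mxE tr_vec.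
by rewrite [X in _ + X = _]mxE tr_vec.
Qed.

Lemma block_cv n1 n2 (A : 'M[C]_n1) (B : 'M[C]_n2) X Y :
  block_mx (hatmx A) 0 0 (hatmx B) *m col_mx (vecmx X) (vecmx Y)
  = col_mx (vecmx (conjm A X)) (vecmx (conjm B Y)).
Proof. by rewrite mul_block_col !mul0mx addr0 add0r !vec_conjm. Qed.

End Lin.



Section Span.
Variable K : fieldType.
Variable n : nat.

Definition PP (P : 'cV[K]_n -> Prop) (v : 'cV[K]_n) :=
  forall w : 'rV[K]_n, (forall u, P u -> w *m u = 0) -> w *m v = 0.

Lemma memcolP (F : 'M[K]_n) (v : 'cV[K]_n) :
  (exists x, v = F *m x) <-> (v^T <= F^T)%MS.
Proof.
split => [[x ->]|/submxP [D e]]; first by rewrite trmx_mul submxMl.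
by exists D^T; rewrite -[v]trmxK e trmx_mul trmxK.
Qed.

Lemma PPD P (a b : 'cV[K]_n) : PP P a -> PP P b -> PP P (a + b).
Proof. by move=> ha hb w hw; rewrite mulmxDr ha ?hb ?addr0. Qed.

Lemma step (P : 'cV[K]_n -> Prop) (B : 'M[K]_n) :
  ~ (forall v, P v -> (v^T <= B)%MS) -> exists v, P v /\ ~ (v^T <= B)%MS.
Proof.
move=> h; apply: NNPP => h2; apply: h => v Pv; apply: NNPP => nv.
by apply: h2; exists v.
Qed.

Lemma span_rows (P : 'cV[K]_n -> Prop) : exists B : 'M[K]_n,
  (forall v, P v -> (v^T <= B)%MS) /\ (forall u : 'rV_n, (u <= B)%MS -> PP P u^T).
Proof.
suff: forall m (B : 'M[K]_n), (n - \rank B <= m)%N ->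
   (forall u : 'rV_n, (u <= B)%MS -> PP P u^T) -> exists B' : 'M[K]_n,
  (forall v, P v -> (v^T <= B')%MS) /\ (forall u : 'rV_n, (u <= B')%MS -> PP P u^T).
  move=> /(_ n 0); apply; first exact: leq_subr.
  by move=> u; rewrite submx0 => /eqP ->; rewrite trmx0 => w _; rewrite mulmx0.
elim=> [|m IH] B hm hB.
{ case: (classic (forall v, P v -> (v^T <= B)%MS)) => [all|]; first by exists B.
  move=> nall; have [v [Pv nv]] := step nall; exfalso.
  have lt : (\rank B < \rank (B + v^T)%MS)%N.
    apply: rank_ltmx; rewrite ltmxE addsmxSl /=; apply/negP => h; apply: nv.
    exact: submx_trans (addsmxSr B v^T) h.
  have := rank_leq_col (B + v^T)%MS; lia. }
case: (classic (forall v, P v -> (v^T <= B)%MS)) => [all|]; first by exists B.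
move=> nall; have [v [Pv nv]] := step nall.
have lt : (\rank B < \rank (B + v^T)%MS)%N.
  apply: rank_ltmx; rewrite ltmxE addsmxSl /=; apply/negP => h; apply: nv.
  exact: submx_trans (addsmxSr B v^T) h.
apply: (IH (B + v^T)%MS).
  have := rank_leq_col (B + v^T)%MS; lia.
move=> u /sub_addsmxP [[D1 D2] /= ->]; rewrite linearD; apply: PPD.
  by apply: hB; rewrite submxMl.
change (PP P (trmx (D2 *m v^T))).
by move=> w hw; rewrite trmx_mul trmxK mulmxA hw // mul0mx.
Qed.

Lemma span_col (P : 'cV[K]_n -> Prop) : exists F : 'M[K]_n,
  forall v, (exists x, v = F *m x) <-> PP P v.
Proof.
have [B [h1 h2]] := span_rows P.
exists B^T => v; rewrite memcolP trmxK; split => [h|hv].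
  by rewrite -[v]trmxK; apply: h2.
case: (boolP (v^T <= B)%MS) => // nv; exfalso.
move: nv; rewrite submxE => /eqP ne.
have /existsP [j hj] : [exists j, (v^T *m cokermx B) 0 j != 0].
  apply/existsP; apply: NNPP => hne; apply: ne; apply/matrixP => i j.
  rewrite ord1 [RHS]mxE; apply/eqP; apply: NNPP => h; apply: hne.
  by exists j; apply/negP.
set c := cokermx B *m delta_mx j (0 : 'I_1).
have Bc : B *m c = 0 by rewrite /c mulmxA mulmx_coker mul0mx.
have h0 : c^T *m v = 0.
  apply: hv => u /h1 /submxP [D e].
  by rewrite -[c^T *m u]trmxK trmx_mul trmxK e -mulmxA Bc mulmx0 trmx0.
move: h0 => /(congr1 trmx); rewrite trmx_mul trmxK trmx0.
move/(congr1 (fun M : 'M[K]_1 => M 0 0)); rewrite [RHS]mxE /c mulmxA -colE mxE.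
by move/eqP; rewrite (negbTE hj).
Qed.

Lemma Aexists (F F' H : 'M[K]_n) :
  (forall x : 'cV[K]_n, exists y, H *m (F *m x) = F' *m y) ->
  exists A, H *m F = F' *m A.
Proof.
move=> hx; suff /submxP [D e] : ((H *m F)^T <= F'^T)%MS.
  by exists D^T; rewrite -[H *m F]trmxK e trmx_mul trmxK.
apply/row_subP => i; rewrite -tr_col colE -mulmxA.
have [y ->] := hx (delta_mx i 0).
by rewrite trmx_mul submxMl.
Qed.

Lemma adjust (F : 'M[K]_n) (r : 'cV[K]_n) (w0 : 'rV[K]_n) :
  (exists x, r = F *m x) -> w0 != 0 -> w0 *m F = 0 ->
  exists F2 : 'M[K]_n,
    (forall v : 'cV[K]_n, (exists x : 'cV[K]_n, v = F2 *m x) <-> (exists x : 'cV[K]_n, v = F *m x)) /\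
    (forall j : 'I_n, val j = 0%N -> col j F2 = r).
Proof.
move=> hr w0n0 w0F.
have n_gt0 : (0 < n)%N.
  case: (posnP n) => // n0; case/eqP: w0n0; apply/matrixP => i j.
  by move: (ltn_ord j); rewrite [X in (_ < X)%N -> _]n0.
set B := F^T.
have rlt : (\rank B < n)%N.
  rewrite ltn_neqAle rank_leq_col andbT; apply/negP => full.
  have uB : B \in unitmx by rewrite -row_full_unit.
  have Bw : B *m w0^T = 0 by rewrite /B -trmx_mul w0F trmx0.
  case/eqP: w0n0; apply: trmx_inj; rewrite trmx0.
  by rewrite -(mulKmx uB w0^T) Bw mulmx0.
set B1 : 'M[K]_n := pid_mx (\rank B) *m row_ebase B.
have eB : B = col_ebase B *m B1 by rewrite /B1 mulmxA mulmx_ebase.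
have B_B1 : (B <= B1)%MS by rewrite {1}eB submxMl.
have B1_B : (B1 <= B)%MS.
  by rewrite -(mulKmx (col_ebase_unit B) B1) -eB submxMl.
have lst_lt : (n.-1 < n)%N by rewrite ltn_predL.
set lst : 'I_n := Ordinal lst_lt.
have rowlst : row lst B1 = 0.
  rewrite /B1 row_mul; apply/matrixP => i j; rewrite !mxE big1 // => k _.
  rewrite !mxE /=.
  have -> : (n.-1 < \rank B)%N = false by apply/negbTE; rewrite -leqNgt; lia.
  by rewrite andbF mul0r.
pose prevo (i : 'I_n) : 'I_n := Ordinal (leq_ltn_trans (leq_pred i) (ltn_ord i)).
set B2 : 'M[K]_n := \matrix_(i, j) if (val i == 0)%N then r j 0 else B1 (prevo i) j.
have rB : (r^T <= B)%MS by rewrite /B -memcolP.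
have B2_B1 : (B2 <= B1)%MS.
  apply/row_subP => i; case i0 : (val i == 0)%N.
    have -> : row i B2 = r^T by apply/matrixP => a b; rewrite !mxE i0 (ord1 a).
    exact: submx_trans rB B_B1.
  have -> : row i B2 = row (prevo i) B1 by apply/matrixP => a b; rewrite !mxE i0.
  exact: row_sub.
have B1_B2 : (B1 <= B2)%MS.
  apply/row_subP => i; case il : (val i == n.-1)%N.
    have -> : i = lst by apply: val_inj; apply/eqP.
    by rewrite rowlst sub0mx.
  have nx : (i.+1 < n)%N.
    have h1 : nat_of_ord i != n.-1 by move/negbT: il.
    have h2 := ltn_ord i; move: h1 h2 n_gt0; move: (nat_of_ord i) => x; lia.
  set nxt : 'I_n := Ordinal nx.
  have -> : row i B1 = row nxt B2.
    have e : prevo nxt = i by apply: val_inj.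
    by apply/matrixP => a b; rewrite !mxE /= e.
  exact: row_sub.
exists B2^T; split.
  move=> v; rewrite !memcolP !trmxK; split => h.
    exact: submx_trans h (submx_trans B2_B1 B1_B).
  exact: submx_trans h (submx_trans B_B1 B1_B2).
move=> j j0; apply/matrixP => a b; rewrite !mxE j0 /= ord1.
by [].
Qed.

Lemma mul_zero m (w : 'M[K]_(m, n)) (F : 'M[K]_n) :
  (forall x : 'cV[K]_n, w *m (F *m x) = 0) -> w *m F = 0.
Proof.
move=> h; apply/matrixP => i j.
have := congr1 (fun M : 'M[K]_(m, 1) => M i 0) (h (delta_mx j 0)).
by rewrite mulmxA -colE !mxE.
Qed.

End Span.



Section VrecL.
Variables (C : numClosedFieldType) (Sigma Gamma : finType) (d : nat).
Variables (U : Sigma -> 'M[C]_d) (M : Gamma -> 'M[C]_d).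

Lemma Uword_rcons w s : Uword U (rcons w s) = U s *m Uword U w.
Proof. by rewrite /Uword foldl_rcons. Qed.

Lemma VrecM a p sb g :
  Vrec U M a p (rcons sb (size a, g)) = M g *m Vrec U M a p sb.
Proof.
elim: sb p => [|[s g'] sb IH] p /=.
  by rewrite /segment subnn take0 /Uword /= mul1mx.
by rewrite IH !mulmxA.
Qed.

Lemma VrecU a s p sb : (p <= size a)%N -> all (fun x => x.1 <= size a)%N sb ->
  Vrec U M (rcons a s) p sb = U s *m Vrec U M a p sb.
Proof.
elim: sb p => [|[q g] sb IH] p hp /=.
  move=> _; rewrite /segment size_rcons drop_rcons // -Uword_rcons.
  rewrite take_oversize ?size_rcons ?size_drop; last lia.
  by rewrite take_oversize // size_drop.
move=> /andP [hq hall]; rewrite IH // !mulmxA.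
rewrite /segment drop_rcons // -cats1 takel_cat // size_drop; lia.
Qed.

End VrecL.

Lemma tr_gt0 (C : numClosedFieldType) d (X : 'M[C]_d) : \tr X != 0 -> (0 < d)%N.
Proof. by case: d X => [|d] X //; rewrite /mxtrace big_ord0 eqxx. Qed.

Lemma sorted_rcons_leq (S : seq nat) x :
  sorted leq S -> all (fun y => y <= x)%N S -> sorted leq (rcons S x).
Proof.
case: S => //= h t hs /andP [hh ht]; rewrite rcons_path hs /=.
have hm : last h t \in h :: t by exact: mem_last.
have hall : all (fun y => y <= x)%N (h :: t) by rewrite /= hh ht.
exact: (allP hall _ hm).
Qed.

Section Main.
Variables (C : numClosedFieldType) (Sigma Gamma : finType) (n1 n2 : nat).
Variables (U1 : Sigma -> 'M[C]_n1) (M1 : Gamma -> 'M[C]_n1) (rho1 : 'M[C]_n1).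
Variables (U2 : Sigma -> 'M[C]_n2) (M2 : Gamma -> 'M[C]_n2) (rho2 : 'M[C]_n2).
Local Notation N := (n1 * n1 + n2 * n2)%N.

Definition HU s : 'M[C]_N := block_mx (hatmx (U1 s)) 0 0 (hatmx (U2 s)).
Definition HM g : 'M[C]_N := block_mx (hatmx (M1 g)) 0 0 (hatmx (M2 g)).
Definition r0 : 'cV[C]_N := col_mx (vecmx rho1) (vecmx rho2).
Definition eta : 'rV[C]_N := adjmx (col_mx (etavec C n1) (- etavec C n2)).

Inductive Reach : nat -> 'cV[C]_N -> Prop :=
| R0 : Reach 0 r0
| RU l v s : Reach l v -> Reach l (HU s *m v)
| RM l v g : Reach l v -> Reach l.+1 (HM g *m v).

Lemma reach_sched l v : Reach l v -> exists a sb,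
  [/\ size sb = l, sorted leq (unzip1 sb), all (fun x => x.1 <= size a)%N sb &
      v = col_mx (vecmx (conjm (Vrec U1 M1 a 0 sb) rho1))
                 (vecmx (conjm (Vrec U2 M2 a 0 sb) rho2))].
Proof.
elim => [|l' v' s _ [a [sb [hs hso hall ->]]]|l' v' g _ [a [sb [hs hso hall ->]]]].
- exists [::], [::]; split => //=.
  by rewrite /segment /Uword /= !conjm1.
- exists (rcons a s), sb; split => //.
    by apply: sub_all hall => x /= h; rewrite size_rcons; exact: leqW.
  by rewrite /HU block_cv !VrecU // !conjmM.
- exists a, (rcons sb (size a, g)); split.
  + by rewrite size_rcons hs.
  + rewrite /unzip1 map_rcons; apply: sorted_rcons_leq => //.
    by rewrite all_map.
  + by rewrite all_rcons /= leqnn hall.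
  + by rewrite /HM block_cv !VrecM !conjmM.
Qed.

Lemma kequiv_eta k : kequiv U1 M1 rho1 U2 M2 rho2 k ->
  forall l v, Reach l v -> (l <= k)%N -> eta *m v = 0.
Proof.
move=> hk l v /reach_sched [a [sb [hs hso hall ->]]] hl.
set S := unzip1 sb.
have hb : size (unzip2 sb) == size S by rewrite /S !size_map.
have := hk a S _ _ (Tuple hb).
rewrite /Pr /Vmx /= zip_unzip => e.
apply/matrixP => i j; rewrite !ord1 /eta eta_cv [RHS]mxE.
rewrite e //; first by rewrite subrr.
  by rewrite /scheduler hso /S all_map.
by rewrite /S size_map hs.
Qed.

Lemma Uword_reach w l x y : Reach l (col_mx (vecmx x) (vecmx y)) ->
  Reach l (col_mx (vecmx (conjm (Uword U1 w) x)) (vecmx (conjm (Uword U2 w) y))).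
Proof.
elim/last_ind: w => [|w s IH] h; first by rewrite /Uword /= !conjm1.
rewrite !Uword_rcons !conjmM -block_cv.
by have := RU s (IH h); rewrite /HU.
Qed.

Lemma sched_reach a sb p l x y : Reach l (col_mx (vecmx x) (vecmx y)) ->
  Reach (l + size sb) (col_mx (vecmx (conjm (Vrec U1 M1 a p sb) x))
                             (vecmx (conjm (Vrec U2 M2 a p sb) y))).
Proof.
elim: sb p l x y => [|[s g] sb IH] p l x y h /=.
  by rewrite addn0; apply: Uword_reach.
rewrite addnS -addSn !conjmM; apply: IH.
by have := RM g (Uword_reach (segment a p s) h); rewrite /HM block_cv.
Qed.

Lemma bwd k (F : nat -> 'M[C]_N) (AS : nat -> Sigma -> 'M[C]_N)
  (AG : nat -> Gamma -> 'M[C]_N) : (0 < n1)%N ->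
  (forall j : 'I_N, val j = 0%N -> col j (F 0%N) = col_mx (vecmx rho1) (vecmx rho2)) ->
  (forall l, (l <= k)%N -> adjmx (col_mx (etavec C n1) (- etavec C n2)) *m F l = 0) ->
  (forall (s : Sigma) l, (l <= k)%N ->
     block_mx (hatmx (U1 s)) 0 0 (hatmx (U2 s)) *m F l = F l *m AS l s) ->
  (forall (g : Gamma) l, (l < k)%N ->
     block_mx (hatmx (M1 g)) 0 0 (hatmx (M2 g)) *m F l = F l.+1 *m AG l g) ->
  kequiv U1 M1 rho1 U2 M2 rho2 k.
Proof.
move=> n1pos h1 h2 h3 h4.
have hR : forall l v, Reach l v -> (l <= k)%N -> exists y, v = F l *m y.
  move=> l v; elim => [|l' v' s _ IH|l' v' g _ IH] hl.
  - have j0lt : (0 < N)%N by rewrite ltn_addr // muln_gt0 n1pos.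
    by exists (delta_mx (Ordinal j0lt) 0); rewrite -colE h1.
  - have [y ->] := IH hl; exists (AS l' s *m y).
    by rewrite mulmxA /HU h3 // mulmxA.
  - have [y ->] := IH (ltnW hl); exists (AG l' g *m y).
    by rewrite mulmxA /HM h4 // mulmxA.
move=> a S hS hSk b.
have hr := sched_reach a (zip S b) 0 R0.
have hle : (0 + size (zip S b) <= k)%N.
  by rewrite add0n size_zip size_tuple minnn.
have [y hy] := hR _ _ hr hle.
have : eta *m (col_mx (vecmx (conjm (Vrec U1 M1 a 0 (zip S b)) rho1))
                 (vecmx (conjm (Vrec U2 M2 a 0 (zip S b)) rho2))) = 0.
  by rewrite hy mulmxA h2 ?mul0mx // size_zip size_tuple minnn.
move/(congr1 (fun M : 'M[C]_1 => M 0 0)); rewrite /eta eta_cv mxE.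
by move/eqP; rewrite subr_eq0 => /eqP.
Qed.

Lemma fwd k : (0 < n1)%N -> kequiv U1 M1 rho1 U2 M2 rho2 k ->
  exists (F : nat -> 'M[C]_N) (AS : nat -> Sigma -> 'M[C]_N)
         (AG : nat -> Gamma -> 'M[C]_N),
    [/\ (forall j : 'I_N, val j = 0%N ->
           col j (F 0%N) = col_mx (vecmx rho1) (vecmx rho2)),
        (forall l, (l <= k)%N ->
           adjmx (col_mx (etavec C n1) (- etavec C n2)) *m F l = 0),
        (forall (s : Sigma) l, (l <= k)%N ->
           block_mx (hatmx (U1 s)) 0 0 (hatmx (U2 s)) *m F l = F l *m AS l s) &
        (forall (g : Gamma) l, (l < k)%N ->
           block_mx (hatmx (M1 g)) 0 0 (hatmx (M2 g)) *m F l = F l.+1 *m AG l g)].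
Proof.
move=> n1pos hk.
have heta := kequiv_eta hk.
have PPU : forall l v s, PP (Reach l) v -> PP (Reach l) (HU s *m v).
  move=> l v s hv w hw; rewrite mulmxA; apply: hv => u hu.
  by rewrite -mulmxA; apply: hw; exact: RU.
have PPM : forall l v g, PP (Reach l) v -> PP (Reach l.+1) (HM g *m v).
  move=> l v g hv w hw; rewrite mulmxA; apply: hv => u hu.
  by rewrite -mulmxA; apply: hw; exact: RM.
have hP l := span_col (Reach l).
pose Fs l := proj1_sig (constructive_indefinite_description _ (hP l)).
have hFs : forall l v, (exists x, v = Fs l *m x) <-> PP (Reach l) v.
  by move=> l; exact: proj2_sig (constructive_indefinite_description _ (hP l)).
have eta_n0 : eta != 0.
  set i0 : 'I_n1 := Ordinal n1pos.
  apply/eqP => /matrixP/(_ 0 (lshift (n2 * n2) (mkidx i0 i0))).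
  rewrite /eta adjmx_col row_mxEl adjmxE !mxE vrow_mk vcol_mk eqxx rmorph1.
  by move/eqP; rewrite oner_eq0.
have etaF0 : eta *m Fs 0%N = 0.
  apply: mul_zero => x; apply: (proj1 (hFs 0%N _)); first by exists x.
  by move=> u hu; exact: heta hu (leq0n k).
have hr0 : exists x, r0 = Fs 0%N *m x by apply/hFs => w hw; exact: hw R0.
have [F0 [hF0 hF0c]] := adjust hr0 eta_n0 etaF0.
pose F l := match l with 0 => F0 | _ => Fs l end.
have hF : forall l v, (exists x, v = F l *m x) <-> PP (Reach l) v.
  case => [|l] v /=; last exact: hFs.
  exact: iff_trans (hF0 v) (hFs 0%N v).
have hAS l s : exists A, HU s *m F l = F l *m A.
  apply: Aexists => x; apply/hF; apply: PPU; apply/hF; by exists x.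
have hAG l g : exists A, HM g *m F l = F l.+1 *m A.
  apply: Aexists => x; apply/hF; apply: PPM; apply/hF; by exists x.
exists F, (fun l s => proj1_sig (constructive_indefinite_description _ (hAS l s))),
  (fun l g => proj1_sig (constructive_indefinite_description _ (hAG l g))); split.
- by move=> j j0; exact: hF0c.
- move=> l hl; apply: mul_zero => x.
  have := proj1 (hF l _) (ex_intro _ x erefl); apply => u hu.
  exact: heta hu hl.
- by move=> s l _; exact: proj2_sig (constructive_indefinite_description _ (hAS l s)).
- by move=> g l _; exact: proj2_sig (constructive_indefinite_description _ (hAG l g)).
Qed.

End Main.

Theorem proposition1 (C : numClosedFieldType) (Sigma Gamma : finType) (n1 n2 : nat)
  (U1 : Sigma -> 'M[C]_n1) (M1 : Gamma -> 'M[C]_n1) (rho1 : 'M[C]_n1)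
  (U2 : Sigma -> 'M[C]_n2) (M2 : Gamma -> 'M[C]_n2) (rho2 : 'M[C]_n2)
  (k : nat) :
  (forall s, unitary (U1 s)) -> measurement M1 -> density rho1 ->
  (forall s, unitary (U2 s)) -> measurement M2 -> density rho2 ->
  (0 < k)%N ->
  kequiv U1 M1 rho1 U2 M2 rho2 k <->
  exists (F : nat -> 'M[C]_(n1 * n1 + n2 * n2))
         (AS : nat -> Sigma -> 'M[C]_(n1 * n1 + n2 * n2))
         (AG : nat -> Gamma -> 'M[C]_(n1 * n1 + n2 * n2)),
    [/\ (* (1) first column of F 0 *)
        (forall j : 'I_(n1 * n1 + n2 * n2), val j = 0%N ->
           col j (F 0%N) = col_mx (vecmx rho1) (vecmx rho2)),
        (* (2) *)
        (forall l, (l <= k)%N ->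
           adjmx (col_mx (etavec C n1) (- etavec C n2)) *m F l = 0),
        (* (3) *)
        (forall (s : Sigma) l, (l <= k)%N ->
           block_mx (hatmx (U1 s)) 0 0 (hatmx (U2 s)) *m F l = F l *m AS l s) &
        (* (4) *)
        (forall (g : Gamma) l, (l < k)%N ->
           block_mx (hatmx (M1 g)) 0 0 (hatmx (M2 g)) *m F l = F l.+1 *m AG l g)].
Proof.
move=> _ _ [_ tr1] _ _ _ _.
have n1pos : (0 < n1)%N by apply: (tr_gt0 (X := rho1)); rewrite tr1 oner_neq0.
split; first exact: fwd.
by case=> F [AS [AG [h1 h2 h3 h4]]]; exact: (bwd n1pos h1 h2 h3 h4).
Qed.
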